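(* Let $\mathcal{G}_n(\mathcal{X},\mathcal{Y},d,Q)$ be a position-optimization game (as defined in the context) and let $\bm{x}$ be a pure strategy profile in which some player $i$ has $x_i\in\mathcal{X}^*$. Then $u_i(x_i,\bm{x}_{-i})\ge\frac{P(x_i)}{k_{\bm{x}}(x_i)}$, with equality if $\bm{x}$ covers $\mathcal{X}^*$. Moreover, for any $x'\in\mathcal{X}^*$ with $x'\neq x_i$, $u_i(x',\bm{x}_{-i})\ge\frac{P(x')}{k_{\bm{x}}(x')+1}$, with equality if $\bm{x}$ covers $\mathcal{X}^*$ and $k_{\bm{x}}(x_i)\ge 2$.
   Context: Position-optimization game: $\mathcal{X}$ is an arbitrary set of positions, $\mathcal{Y}$ an arbitrary set of targets, $d:\mathcal{X}\times\mathcal{Y}\to[0,\infty]$ a proximity function. For $y\in\mathcal{Y}$ let $x^*(y)=\arg\min_{x\in\mathcal{X}} d(x,y)$, and $\mathcal{X}^*=\bigcup_{y\in\mathcal{Y}}x^*(y)$ (pseudo-targets). $Q$ is a probability distribution on $\mathcal{Y}$ with $Q(\{y:|x^*(y)|>1\})=0$ and $|\mathcal{X}^*|<\infty$. For $x\in\mathcal{X}^*$ let $P(x)=Q(\{y: x^*(y)=\{x\}\})$. In the game $\mathcal{G}_n(\mathcal{X},\mathcal{Y},d,Q)$, players $i\in[n]$ choose positions $x_i\in\mathcal{X}$, $\bm{x}=(x_1,\dots,x_n)$; with $X_{\min}(\bm{x},y)=\arg\min_{x_i\in\bm{x}} d(x_i,y)$, player $i$'s utility is $u_i(x_i,\bm{x}_{-i})=\mathbb{E}_{y\sim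 Q}\big[\mathbb{1}[x_i\in X_{\min}(\bm{x},y)]/|X_{\min}(\bm{x},y)|\big]$; $u_i(x',\bm{x}_{-i})$ denotes the utility when player $i$ plays $x'$ instead and the others are unchanged. $k_{\bm{x}}(x)$ is the number of players at position $x$ in $\bm{x}$. A profile $\bm{x}$ covers $\mathcal{X}^*$ if $k_{\bm{x}}(x)\ge1$ for all $x\in\mathcal{X}^*$. *)

(* Defs.v *)
From HB Require Import structures.
From mathcomp Require Import all_boot all_order all_algebra.
From mathcomp Require Import all_classical all_reals all_analysis measurable_realfun.
Set Implicit Arguments. Unset Strict Implicit. Unset Printing Implicit Defensive.
Import Order.TTheory GRing.Theory Num.Theory.
Local Open Scope classical_set_scope.
Local Open Scope ring_scope.
Local Open Scope ereal_scope.

Section PosGame.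
Context {R : realType} {X : Type} {dY : measure_display} {Y : measurableType dY}.
Variable dist : X -> Y -> \bar R.

Definition xstar (y : Y) : set X := [set x | forall x', dist x y <= dist x' y].

Definition Xstar : set X := [set x | exists y, xstar y x].

Definition Pmass (Q : probability Y R) (x : X) : \bar R :=
  Q [set y | xstar y = [set x]].

Definition winners (n : nat) (prof : 'I_n -> X) (y : Y) : {set 'I_n} :=
  [set j | [forall l, dist (prof j) y <= dist (prof l) y]].

Definition share (n : nat) (prof : 'I_n -> X) (i : 'I_n) (y : Y) : R :=
  if i \in winners prof y then ((#|winners prof y|%:R)^-1)%R else 0%R.

Definition utility (Q : probability Y R) (n : nat) (prof : 'I_n -> X) (i : 'I_n)
  : \bar R := \int[Q]_(y in setT) (share prof i y)%:E.

End PosGame.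

Definition deviate {X : Type} (n : nat) (prof : 'I_n -> X) (i : 'I_n) (x' : X)
  : 'I_n -> X := fun j => if j == i then x' else prof j.

Definition kcount {X : Type} (n : nat) (prof : 'I_n -> X) (x : X) : nat :=
  #|[set j | `[< prof j = x >]]|.

Definition covers {X : Type} (n : nat) (prof : 'I_n -> X) (S : set X) : Prop :=
  forall x, S x -> (1 <= kcount prof x)%N.

(* Main.v *)
Require Import Defs.
From HB Require Import structures.
From mathcomp Require Import all_boot all_order all_algebra.
From mathcomp Require Import all_classical all_reals all_analysis measurable_realfun.
Import Order.TTheory GRing.Theory Num.Theory.
Local Open Scope classical_set_scope.
Local Open Scope ring_scope.
Local Open Scope ereal_scope.

Section H.
Context (R : realType) (X : Type) (dY : measure_display)
  (Y : measurableType dY) (dist : X -> Y -> \bar R) (Q : probability Y R).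
Hypothesis hdm : forall x, measurable_fun setT (dist x).

Lemma kcountP n (p : 'I_n -> X) x : (1 <= kcount p x)%N <-> exists j, p j = x.
Proof.
rewrite /kcount; split.
  by case/card_gt0P => j; rewrite inE => /asboolP; exists j.
by case=> j pj; apply/card_gt0P; exists j; rewrite inE; apply/asboolP.
Qed.

Lemma share_ge0 n (p : 'I_n -> X) i y : (0 <= share dist p i y)%R.
Proof. by rewrite /share; case: ifP. Qed.

Lemma share_on n (p : 'I_n -> X) i y : xstar dist y = [set p i] ->
  share dist p i y = ((kcount p (p i))%:R^-1)%R.
Proof.
move=> H.
have Hi : forall x', dist (p i) y <= dist x' y.
  by have : xstar dist y (p i) by rewrite H. 
have Wj : forall j, (j \in winners dist p y) = `[< p j = p i >].
  move=> j; rewrite !inE; apply/idP/idP.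
    move=> /forallP hj; apply/asboolP.
    have : xstar dist y (p j).
      by move=> x'; apply: le_trans (hj i) (Hi x').
    by rewrite H.
  move=> /asboolP pj; apply/forallP => l; rewrite pj; exact: Hi.
rewrite /share Wj; have -> : `[< p i = p i >] by apply/asboolP.
congr (_%:R^-1)%R; rewrite /kcount; apply: eq_card => j.
rewrite Wj; apply/idP/idP => h.
  by rewrite in_setE. 
 by move: h; rewrite in_setE.
Qed.

Lemma share_off n (p : 'I_n -> X) i y x0 j0 : xstar dist y = [set x0] ->
  x0 <> p i -> p j0 = x0 -> share dist p i y = 0%R.
Proof.
move=> H ne pj0; rewrite /share; case: ifP => // /[!inE] /forallP hi.
have Hx0 : forall x', dist x0 y <= dist x' y.
  by have : xstar dist y x0 by rewrite H.
have : xstar dist y (p i).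
  by move=> x'; apply: le_trans (hi j0) _; rewrite pj0.
by rewrite H => /= E; exfalso; apply: ne.
Qed.

Definition ee {n} (p : 'I_n -> X) j l (y : Y) : R :=
  \1_[set y | dist (p j) y <= dist (p l) y] y.
Definition ww {n} (p : 'I_n -> X) j y : R := \prod_(l <- index_enum 'I_n) ee p j l y.
Definition cc {n} (p : 'I_n -> X) y : R := \sum_(j <- index_enum 'I_n) ww p j y.

Lemma ww_E n (p : 'I_n -> X) j y : ww p j y = (j \in winners dist p y)%:R.
Proof.
rewrite /ww inE; have [h|h] := boolP [forall l, dist (p j) y <= dist (p l) y].
  by rewrite big1 // => l _; rewrite /ee indicE mem_set //; exact: (forallP h l).
case/forallPn: h => l hl.
rewrite (bigD1_seq l) ?mem_index_enum ?index_enum_uniq //=.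
by rewrite /ee indicE memNset ?mul0r //; apply/negP.
Qed.

Lemma cc_E n (p : 'I_n -> X) y : cc p y = (#|winners dist p y|)%:R.
Proof.
rewrite /cc; under eq_bigr do rewrite ww_E.
rewrite -sum1_card natr_sum [RHS]big_mkcond /=.
by apply: eq_bigr => j _; case: (j \in _).
Qed.

Definition shf {n} (p : 'I_n -> X) i y : R :=
  ww p i y * \sum_(k < n.+1) (k%:R^-1 * \1_[set y | cc p y = k%:R] y).

Lemma share_E n (p : 'I_n -> X) i y : share dist p i y = shf p i y.
Proof.
rewrite /shf ww_E /share; case: ifP => hi; last by rewrite mul0r.
rewrite mul1r.
have hm : (#|winners dist p y| < n.+1)%N.
  by rewrite ltnS -[X in (_ <= X)%N](card_ord n) max_card.
rewrite (bigD1 (Ordinal hm)) //= big1 => [|k hk].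
  by rewrite indicE mem_set ?mulr1 ?addr0 //= cc_E.
rewrite indicE memNset ?mulr0 //= cc_E => /eqP; rewrite eqr_nat => /eqP E.
by move/eqP: hk; apply; apply: val_inj; rewrite /= E.
Qed.

Lemma mset_le (a b : X) : measurable [set y | dist a y <= dist b y].
Proof. by rewrite -[X in measurable X]setTI; apply: measurable_lee. Qed.

Lemma ww_meas n (p : 'I_n -> X) j : measurable_fun setT (ww p j).
Proof.
by apply: measurable_prod => l _; apply: measurable_indic; exact: mset_le.
Qed.

Lemma cc_meas n (p : 'I_n -> X) : measurable_fun setT (cc p).
Proof. by apply: measurable_sum => j; exact: ww_meas. Qed.

Lemma share_meas n (p : 'I_n -> X) i :
  measurable_fun setT (fun y => (share dist p i y)%:E).
Proof.
have -> : (fun y => (share dist p i y)%:E) = EFin \o shf p i.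
  by apply/funext => y /=; rewrite share_E.
apply/measurable_EFinP; apply: measurable_funM; first exact: ww_meas.
apply: measurable_sum => k; apply: measurable_funM; first exact: measurable_cst.
apply: measurable_indic.
rewrite -[X in measurable X]setTI.
have H := @cc_meas _ p measurableT _ (measurable_set1 (k%:R)). exact H.
Qed.

Lemma intc (x : X) (c : R) :
  measurable [set y | xstar dist y = [set x]] -> (0 <= c)%R ->
  \int[Q]_(y in setT) (c * \1_[set y | xstar dist y = [set x]] y)%:E
  = Pmass dist Q x * c%:E.
Proof.
move=> mA c0.
rewrite (integralZl_indic _ (fun _ => [set y | xstar dist y = [set x]])) //=.
  by rewrite integral_indic // setIT muleC.
by move=> h; exfalso; move: h; rewrite ltNge c0.
Qed.

Lemma mindc (A : set Y) (c : R) : measurable A ->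
  measurable_fun setT (fun y => (c * \1_A y)%:E).
Proof.
move=> mA; apply/(measurable_EFinP _ (fun y => c * \1_A y)%R).
apply: measurable_funM; first exact: measurable_cst.
exact: measurable_indic.
Qed.

Lemma lower n (p : 'I_n -> X) i :
  measurable [set y | xstar dist y = [set p i]] ->
  Pmass dist Q (p i) * ((kcount p (p i))%:R^-1)%:E <= utility dist Q p i.
Proof.
move=> mA.
have c0 : (0 <= (kcount p (p i))%:R^-1 :> R)%R by rewrite invr_ge0.
rewrite -(intc (p i)) //; apply: ge0_le_integral.
- exact: measurableT.
- by move=> y _; rewrite lee_fin mulr_ge0 // indicE; case: (_ \in _).
- exact: mindc.
- exact: share_meas.
move=> y _; rewrite lee_fin indicE; case: (boolP (y \in _)) => hy.
  by rewrite mulr1 share_on //; exact: set_mem hy.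
by rewrite mulr0 share_ge0.
Qed.

Lemma equal n (p : 'I_n -> X) i :
  measurable [set y | xstar dist y = [set p i]] ->
  Q.-negligible
     [set y | exists x1 x2, xstar dist y x1 /\ xstar dist y x2 /\ x1 <> x2] ->
  Q.-negligible [set y | xstar dist y = set0] ->
  covers p (Xstar dist) ->
  utility dist Q p i = Pmass dist Q (p i) * ((kcount p (p i))%:R^-1)%:E.
Proof.
move=> mA huniq hne hcov.
have c0 : (0 <= (kcount p (p i))%:R^-1 :> R)%R by rewrite invr_ge0.
rewrite -(intc (p i)) // /utility.
apply: (ae_eq_integral (fun y => (_ * \1_[set y | xstar dist y = [set p i]] y)%:E)) => //.
- exact: share_meas.
- exact: mindc.
apply: (negligibleS _ (negligibleU huniq hne)) => y /= hy.
apply: contrapT => hN; apply: hy => _.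
have n1 : ~ (exists x1 x2, xstar dist y x1 /\ xstar dist y x2 /\ x1 <> x2).
  by move=> h; apply: hN; left.
have n2 : ~ (xstar dist y = set0) by move=> h; apply: hN; right.
have [x0 hx0] : exists x0, xstar dist y x0.
  apply: contrapT => hno; apply: n2; apply/seteqP; split => x //= hx.
  by apply: hno; exists x.
have E : xstar dist y = [set x0].
  apply/seteqP; split => x /= hx; last by rewrite hx.
  by apply: contrapT => ne; apply: n1; exists x, x0.
have : Xstar dist x0 by exists y.
move/hcov/kcountP => [j0 pj0].
congr EFin; rewrite indicE.
have [e|ne] := pselect (x0 = p i).
  by rewrite mem_set /= -?e // mulr1 share_on // -e.
rewrite memNset ?mulr0; first exact: share_off E ne pj0.
by move=> /= A; apply: ne; have : [set x0] x0 by []; rewrite -E A.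
Qed.
End H.

Lemma inK n (P : 'I_n -> Prop) j : (j \in [set j | `[< P j >]]) = `[< P j >].
Proof. by apply/idP/idP => h; [move: h; rewrite in_setE | rewrite in_setE]. Qed.

Lemma dev_k (X : Type) n (p : 'I_n -> X) i x' : p i <> x' ->
  kcount (deviate p i x') x' = (kcount p x').+1.
Proof.
move=> ne; rewrite /kcount (cardD1 i) [in RHS](cardD1 i) !inK.
have -> : `[< deviate p i x' i = x' >] by apply/asboolP; rewrite /deviate eqxx.
have -> : `[< p i = x' >] = false by apply/asboolP.
rewrite add1n add0n; congr _.+1; apply: eq_card => j; rewrite !inE !inK.
by case: eqP => //= /eqP ji; rewrite /deviate (negbTE ji).
Qed.

Lemma dev_cov (X : Type) n (p : 'I_n -> X) i x' (S : set X) :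
  p i <> x' -> covers p S -> (2 <= kcount p (p i))%N ->
  covers (deviate p i x') S.
Proof.
move=> ne hc h2 x Sx; apply/kcountP.
have [->|nx] := pselect (x = x'); first by exists i; rewrite /deviate eqxx.
have [ei|nei] := pselect (x = p i).
  move: h2; rewrite /kcount (cardD1 i) inK.
  have -> : `[< p i = p i >] by apply/asboolP.
  rewrite add1n ltnS => /card_gt0P [j]; rewrite !inE inK => /andP [ji /asboolP pj].
  by exists j; rewrite /deviate (negbTE ji) ei.
case/kcountP: (hc x Sx) => j pj; exists j; rewrite /deviate.
case: eqP => [ji|//]; by exfalso; apply: nei; rewrite -pj ji.
Qed.

Theorem lemma1 (R : realType) (X : Type) (dY : measure_display)
  (Y : measurableType dY) (dist : X -> Y -> \bar R) (Q : probability Y R)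
  (n : nat) (prof : 'I_n -> X) (i : 'I_n)
  (hd0 : forall x y, 0 <= dist x y)
  (hdm : forall x, measurable_fun setT (dist x))
  (hPm : forall x, measurable [set y | xstar dist y = [set x]])
  (huniq : Q.-negligible
     [set y | exists x1 x2, xstar dist y x1 /\ xstar dist y x2 /\ x1 <> x2])
  (hne : Q.-negligible [set y | xstar dist y = set0])
  (hfin : finite_set (Xstar dist))
  (hi : Xstar dist (prof i)) :
  (Pmass dist Q (prof i) * ((kcount prof (prof i))%:R^-1)%:E
       <= utility dist Q prof i
   /\ (covers prof (Xstar dist) ->
       utility dist Q prof i
         = Pmass dist Q (prof i) * ((kcount prof (prof i))%:R^-1)%:E))
  /\
  (forall x', Xstar dist x' -> x' <> prof i ->
     Pmass dist Q x' * (((kcount prof x').+1)%:R^-1)%:E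
       <= utility dist Q (deviate prof i x') i
     /\ (covers prof (Xstar dist) -> (2 <= kcount prof (prof i))%N ->
         utility dist Q (deviate prof i x') i
           = Pmass dist Q x' * (((kcount prof x').+1)%:R^-1)%:E)).
Proof.
split.
  split; first exact: lower.
  by move=> hc; apply: equal.
move=> x' _ ne.
have di : deviate prof i x' i = x' by rewrite /deviate eqxx.
have ne' : prof i <> x' by move=> e; apply: ne.
rewrite -(@dev_k _ _ prof i x' ne').
split.
  by have := @lower R X dY Y dist Q hdm n (deviate prof i x') i; rewrite di; apply.
move=> hc h2.
have := @equal R X dY Y dist Q hdm n (deviate prof i x') i; rewrite di; apply => //.
exact: dev_cov.
Qed.
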